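(* Let $p$ be an odd prime and $N=C_{2p^2}$. The regular subgroups of $\mathrm{Hol}(N)$ are exactly $p$ subgroups isomorphic to $C_{2p^2}$ (namely $\langle (x,\varphi)\rangle$ with $x$ a generator of $N$ and $\varphi^p=\mathrm{Id}$) and one subgroup isomorphic to $D_{2p^2}$ (namely $\langle (a^2,\mathrm{Id}),(a,\chi)\rangle$ for $a$ a generator of $N$ and $\chi$ the automorphism $x\mapsto x^{-1}$).
   Context: $\mathrm{Hol}(N)=N\rtimes\mathrm{Aut}(N)$, with elements $(x,\varphi)$, product $(x,\varphi)(y,\psi)=(x\varphi(y),\varphi\psi)$, acting on $N$ by $(x,\varphi)\cdot n=x\varphi(n)$. A subgroup is regular if this action is transitive with trivial stabilizers. $D_{2p^2}$ is the dihedral group of order $2p^2$. *)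

(* Defs.v *)
From HB Require Import structures.
From mathcomp Require Import all_boot all_order all_algebra all_fingroup all_solvable.
Set Implicit Arguments. Unset Strict Implicit. Unset Printing Implicit Defensive.
Local Open Scope group_scope.

(* N is the whole group [set: gT] (a cyclic group of order 2p^2 in the theorem).
   The holomorph Hol(N) = N ⋊ Aut(N) is represented faithfully through its
   defining action on N: the element (x, phi) is the permutation n |-> x * phi n. *)
Section Hol.
Variable gT : finGroupType.

Lemma hol_fun_inj (x : gT) (phi : {perm gT}) : injective (fun n => x * phi n).
Proof. by move=> a b /= /(mulgI x) /perm_inj. Qed.

Definition hol_elt (x : gT) (phi : {perm gT}) : {perm gT} := perm (@hol_fun_inj x phi).

Definition Hol : {set {perm gT}} :=
  [set hol_elt x phi | x in [set: gT], phi in Aut [set: gT]].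

Definition inv_perm : {perm gT} := perm (@invg_inj gT).

Definition regular (H : {set {perm gT}}) : Prop :=
  [transitive H, on [set: gT] | 'P] /\ forall n : gT, 'C_H[n | 'P] = 1.

Definition cyc_regs (p : nat) : {set {group {perm gT}}} :=
  [set H : {group {perm gT}} | [exists x : gT, exists phi : {perm gT},
     [&& generator [set: gT] x, phi \in Aut [set: gT], phi ^+ p == 1
       & H :==: <[hol_elt x phi]>]]].

Definition dih_regs : {set {group {perm gT}}} :=
  [set H : {group {perm gT}} | [exists a : gT,
     generator [set: gT] a &&
     (H :==: <<[set hol_elt (a ^+ 2) 1; hol_elt a inv_perm]>>)]].
End Hol.

(* Main.v *)
Require Import Defs.
From HB Require Import structures.
From mathcomp Require Import all_boot all_order all_algebra all_fingroup all_solvable.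
From mathcomp Require Import zify.
Set Implicit Arguments. Unset Strict Implicit. Unset Printing Implicit Defensive.

Lemma sub_2p p : 0 < p -> 2 * p ^ 2 - 2 * (p.-1 * p) = 2 * p.
Proof. move=> p0; case: p p0 => // p _ /=; nia. Qed.

Lemma odd_decomp p : odd p -> p = 2 * p./2 + 1.
Proof. by move=> o; rewrite -{1}(odd_double_half p) o; lia. Qed.

Fixpoint geo k m := if m is m'.+1 then 1 + k * geo k m' else 0.

Lemma geo_inv d m : exists E, geo (1 + d) m = m + d * 'C(m, 2) + d ^ 2 * E.
Proof.
elim: m => [|m [E IH]]; first by exists 0; rewrite bin0n /= !muln0.
exists ('C(m, 2) + E + d * E); rewrite /= IH binS bin1; nia.
Qed.

Lemma bin2_odd p : odd p -> 'C(p, 2) = p * p./2.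
Proof.
move=> o; rewrite bin2 (_ : p.-1 = 2 * p./2); last by have := odd_decomp o; lia.
by rewrite mulnCA mul2n doubleK.
Qed.

Lemma geo_p p j : odd p -> exists J, geo (1 + 2 * p * j) p = p + 2 * p ^ 2 * J.
Proof.
move=> o; have [E ->] := geo_inv (2 * p * j) p; rewrite bin2_odd //.
exists (j * p./2 + 2 * j ^ 2 * E); nia.
Qed.

Lemma idB p j : odd p -> 1 + p./2.+1 * ((1 + 2 * p * j) * (1 + 2 * p * j)) =
  p./2.+1 + (1 + 2 * p * j) + 2 * p ^ 2 * (j * (1 + j * (p + 1))).
Proof.
move=> o; have := odd_decomp o; move: (p./2) => q -> ; nia.
Qed.

Lemma div_lemma p d : prime p -> d %| 2 * p ^ 2 -> ~~ (d %| 2 * p) -> ~~ (d %| p ^ 2) ->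
  d = 2 * p ^ 2.
Proof.
move=> pr dn n1 n2; case od: (odd d).
  have cd : coprime d 2 by rewrite coprime_sym prime_coprime // dvdn2 od.
  by move: dn; rewrite mulnC Gauss_dvdl // (negbTE n2).
have de : d = 2 * d./2 by rewrite -{1}(odd_double_half d) od -mul2n.
move: dn n1; rewrite de !dvdn_pmul2l // => dn n1.
have [m m2 dm] := dvdn_pfactor _ _ pr dn.
move: m2 n1; rewrite dm; case: m {dm} => [|[|[|]]] //=; rewrite ?expn0 ?expn1 ?dvd1n ?dvdnn //.
Qed.

Lemma psi1 (gT : finGroupType) (a : gT) p : odd p -> (a ^+ 2 = 1)%g -> (a ^+ p = 1)%g -> a = 1%g.
Proof.
move=> o a2 ap; move: ap; rewrite (odd_decomp o) expgD expgM a2 expg1n mul1g expg1 //.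
Qed.

Lemma sub_pm1 k : (0 < k)%N -> ((k + 1) - (k - 1) = 2)%N.
Proof. lia. Qed.

Lemma nd2p p : 1 < p -> ~~ (2 * p ^ 2 %| 2 * p).
Proof. move=> p1; apply/negP => /dvdn_leq; case: p p1 => // p p1 /(_ isT); nia. Qed.

Lemma ndp2 p : 1 < p -> ~~ (2 * p ^ 2 %| p ^ 2).
Proof. move=> p1; apply/negP => /dvdn_leq; case: p p1 => // p p1 /(_ isT); nia. Qed.

Lemma ndvd_pred p : 1 < p -> ~~ (p %| p.-1).
Proof. move=> p1; apply/negP => /dvdn_leq; case: p p1 => [|[|p]] // _ /(_ isT) /=; lia. Qed.

Lemma pred_gt0 p : 1 < p -> 0 < p.-1.
Proof. lia. Qed.

Local Open Scope group_scope.

Section Basics.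
Variable gT : finGroupType.
Implicit Types (x y z : gT) (phi psi : {perm gT}).

Lemma holE x phi m : hol_elt x phi m = x * phi m.
Proof. by rewrite /hol_elt permE. Qed.

Lemma AutM phi : phi \in Aut [set: gT] -> forall a b, phi (a * b) = phi a * phi b.
Proof. by move=> /Aut_morphic /morphicP H a b; apply: H; rewrite inE. Qed.

Lemma Aut1 phi : phi \in Aut [set: gT] -> phi 1 = 1.
Proof. by move=> A; apply: (mulgI (phi 1)); rewrite mulg1 -AutM ?mulg1. Qed.

Lemma AutX phi : phi \in Aut [set: gT] -> forall a m, phi (a ^+ m) = phi a ^+ m.
Proof. by move=> A a; elim=> [|m IH]; rewrite ?Aut1 // !expgS AutM // IH. Qed.

Lemma AutV phi : phi \in Aut [set: gT] -> forall a, phi a^-1 = (phi a)^-1.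
Proof.
move=> A a; apply: (mulgI (phi a)); rewrite -AutM // !mulgV Aut1 //.
Qed.

Lemma hol_at1 x phi : phi \in Aut [set: gT] -> hol_elt x phi 1 = x.
Proof. by move=> A; rewrite holE Aut1 ?mulg1. Qed.

Lemma hol_inj x y phi psi : phi \in Aut [set: gT] -> psi \in Aut [set: gT] ->
  hol_elt x phi = hol_elt y psi -> x = y /\ phi = psi.
Proof.
move=> A B E; have xy : x = y by rewrite -(hol_at1 x A) E hol_at1.
split=> //; apply/permP => m; move/permP: E => /(_ m); rewrite !holE xy.
by move/mulgI.
Qed.

Lemma hol_mul x y phi psi : psi \in Aut [set: gT] ->
  hol_elt x phi * hol_elt y psi = hol_elt (y * psi x) (phi * psi).
Proof. by move=> B; apply/permP => m; rewrite permM !holE permM AutM // mulgA. Qed.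

Lemma hol_11 : hol_elt 1 1 = 1 :> {perm gT}.
Proof. by apply/permP => m; rewrite holE !perm1 mul1g. Qed.

Lemma hol_1phi phi : hol_elt 1 phi = phi.
Proof. by apply/permP => m; rewrite holE mul1g. Qed.

Lemma Aut_id : (1 : {perm gT}) \in Aut [set: gT].
Proof. exact: group1. Qed.

Lemma hol_expg x phi m : phi \in Aut [set: gT] ->
  (hol_elt x phi) ^+ m = hol_elt ((hol_elt x phi ^+ m) 1) (phi ^+ m).
Proof.
move=> A; suff [y ->] : exists y, (hol_elt x phi) ^+ m = hol_elt y (phi ^+ m).
  by rewrite hol_at1 // groupX.
elim: m => [|m [y IH]]; first by exists 1; rewrite !expg0 hol_11.
by exists (x * phi y); rewrite expgSr IH hol_mul // expgSr.
Qed.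

Lemma trans_expg x m : (hol_elt x 1) ^+ m = hol_elt (x ^+ m) 1.
Proof.
elim: m => [|m IH]; first by rewrite !expg0 hol_11.
by rewrite expgSr IH hol_mul ?Aut_id // perm1 mulg1 -expgS.
Qed.

Lemma trans_eq1 x : (hol_elt x 1 == 1) = (x == 1).
Proof.
apply/eqP/eqP => [E|->]; last exact: hol_11.
by have [] := hol_inj Aut_id Aut_id (etrans E (esym hol_11)).
Qed.

Lemma stabP (H : {set {perm gT}}) (h : {perm gT}) z :
  reflect (h \in H /\ h z = z) (h \in 'C_H[z | 'P]).
Proof.
rewrite inE; apply: (iffP andP) => [[-> /astab1P]|[-> E]] //.
by split=> //; apply/astab1P.
Qed.

End Basics.

Lemma sqg (T : finGroupType) (a : T) : a * a = a ^+ 2.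
Proof. by rewrite expgS expg1. Qed.


Section Reg.
Variable gT : finGroupType.

Lemma reg_card (H : {group {perm gT}}) : regular H -> #|H| = #|[set: gT]|.
Proof.
move=> [tr st]; rewrite -(atransP tr 1 (in_setT _)) card_orbit st.
by rewrite indexg1.
Qed.

Lemma card_reg (H : {group {perm gT}}) :
  #|H| = #|[set: gT]| -> 'C_H[1 | 'P] = 1 -> regular H.
Proof.
move=> cH st1.
have o1 : orbit 'P H 1 = [set: gT].
  by apply/eqP; rewrite eqEcard subsetT /= card_orbit st1 indexg1 cH.
have tr : [transitive H, on [set: gT] | 'P].
  by apply/imsetP; exists 1; rewrite ?in_setT // o1.
split=> // z; apply/eqP; rewrite trivg_card1.
have := card_orbit 'P H z; rewrite (atransP tr z (in_setT _)) -cH.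
move/esym=> E; have := Lagrange (subsetIl H 'C[z | 'P]).
rewrite E => /eqP; rewrite -{2}(mul1n #|H|) eqn_pmul2r ?cardG_gt0 //=.
Qed.

Lemma reg_uniq (H : {group {perm gT}}) h1 h2 z : regular H ->
  h1 \in H -> h2 \in H -> h1 z = h2 z -> h1 = h2.
Proof.
move=> [_ st] H1 H2 E; apply/eqP; rewrite eq_mulgV1.
have : h1 * h2^-1 \in 'C_H[z | 'P].
  apply/stabP; split; first by rewrite groupM ?groupV.
  by rewrite permM E permK.
by rewrite st inE.
Qed.

Lemma reg_ex (H : {group {perm gT}}) z : regular H -> exists2 h, h \in H & h 1 = z.
Proof.
move=> [tr _]; have : z \in orbit 'P H 1 by rewrite (atransP tr 1 (in_setT _)) in_setT.
by case/orbitP => h hH <-; exists h.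
Qed.

End Reg.


Section Main.
Variables (p : nat) (gT : finGroupType) (g : gT).
Hypotheses (pr_p : prime p) (odd_p : odd p) (og : #[g] = (2 * p ^ 2)%N)
  (gG : forall z : gT, z \in <[g]>).
Local Notation n := (2 * p ^ 2)%N.
Implicit Types (z w x y : gT).

Lemma p_gt2 : 2 < p.
Proof.
have := prime_gt1 pr_p; rewrite leq_eqVlt => /orP [/eqP E|//].
by move: odd_p; rewrite -E.
Qed.

Lemma setT_g : [set: gT] = <[g]>.
Proof. by apply/setP => z; rewrite in_setT gG. Qed.

Lemma card_gT : #|[set: gT]| = n.
Proof. by rewrite setT_g. Qed.

Lemma gpow z : exists i, z = g ^+ i.
Proof. by have /cycleP [i ->] := gG z; exists i. Qed.

Lemma zn1 z : z ^+ n = 1.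
Proof. by have [i ->] := gpow z; rewrite -expgM mulnC expgM -og expg_order expg1n. Qed.

Lemma powmod z a : z ^+ a = z ^+ (a %% n).
Proof. by rewrite {1}(divn_eq a n) expgD mulnC expgM zn1 expg1n mul1g. Qed.

Lemma comm z w : z * w = w * z.
Proof.
have [i ->] := gpow z; have [j ->] := gpow w.
by rewrite -!expgD addnC.
Qed.

Lemma aut_pow (phi : {perm gT}) : phi \in Aut [set: gT] -> exists k, forall z, phi z = z ^+ k.
Proof.
move=> A; have [k Ek] := gpow (phi g); exists k => z.
have [i ->] := gpow z; by rewrite AutX // Ek -!expgM mulnC.
Qed.

Lemma perm_pow (phi : {perm gT}) k : (forall z, phi z = z ^+ k) -> forall e z, (phi ^+ e) z = z ^+ (k ^ e).
Proof.
move=> E; elim=> [|e IH] z; first by rewrite expg0 perm1 expn0 expg1.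
by rewrite expgSr permM IH E -expgM expnSr.
Qed.

Lemma inv_aut : inv_perm gT \in Aut [set: gT].
Proof.
rewrite inE; apply/andP; split.
  by apply/subsetP => z _; rewrite in_setT.
apply/morphicP => a b _ _; rewrite !permE invMg comm //.
Qed.

Lemma inv_inv : inv_perm gT * inv_perm gT = 1.
Proof. by apply/permP => z; rewrite permM !permE invgK. Qed.

Lemma inv_neq1 : inv_perm gT != 1.
Proof.
apply/eqP => /permP /(_ g); rewrite !permE => /eqP.
have E2 : g * g = g ^+ 2 by rewrite expgS expg1.
rewrite eq_invg_mul E2 -order_dvdn og => /dvdn_leq; move/(_ isT).
have := p_gt2; nia.
Qed.


Lemma p_dvd_n : (p %| n)%N.
Proof. by apply/dvdnP; exists (2 * p)%N; nia. Qed.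

Lemma two_dvd_n : (2 %| n)%N.
Proof. by apply/dvdnP; exists (p ^ 2)%N; nia. Qed.

Lemma cop2p : coprime 2 p.
Proof. by rewrite prime_coprime // dvdn2 odd_p. Qed.

Lemma cop2p2 : coprime 2 (p ^ 2).
Proof. by rewrite coprimeXr // cop2p. Qed.

Lemma aut_p psi : psi \in Aut [set: gT] -> psi ^+ p = 1 ->
  exists j, forall z, psi z = z ^+ (1 + 2 * p * j)%N.
Proof.
move=> A Pp; have [k Ek] := aut_pow A.
have h1 : g ^+ (k ^ p)%N = g ^+ 1.
  by rewrite -(perm_pow Ek) Pp perm1 expg1.
move/eqP: h1; rewrite eq_expg_mod_order og => /eqP hm.
have hmp : (k ^ p = 1 %[mod p])%N.
  by move: (congr1 (modn^~ p) hm) => /=; rewrite !modn_dvdm // p_dvd_n.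
have hm2 : (k ^ p = 1 %[mod 2])%N.
  by move: (congr1 (modn^~ 2%N) hm) => /=; rewrite !modn_dvdm // two_dvd_n.
have kp : (k = 1 %[mod p])%N by rewrite -(fermat_little k pr_p).
have k2 : (k = 1 %[mod 2])%N.
  move: hm2; rewrite !modn2 oddX; case: p pr_p => // ? _; by rewrite orFb.
have k2p : (k %% (2 * p) = 1)%N.
  have := chinese_remainder cop2p k 1; rewrite k2 kp !eqxx /= => /eqP ->.
  by rewrite modn_small // ; have := p_gt2; lia.
exists (k %/ (2 * p))%N => z; rewrite Ek {1}(divn_eq k (2 * p)) k2p.
congr (z ^+ _); lia.
Qed.

Lemma aut_2 eps : eps \in Aut [set: gT] -> eps ^+ 2 = 1 ->
  eps = 1 \/ eps = inv_perm gT.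
Proof.
move=> A P2; have [k Ek] := aut_pow A.
have h1 : g ^+ (k ^ 2)%N = g ^+ 1.
  by rewrite -(perm_pow Ek) P2 perm1 expg1.
move/eqP: h1; rewrite eq_expg_mod_order og => /eqP hm.
have k0 : (0 < k)%N.
  case: k Ek hm => // _; rewrite exp0n // mod0n modn_small //; have := p_gt2; nia.
have hd : (n %| (k - 1) * (k + 1))%N.
  rewrite -(exp1n 2) -subn_sqr -eqn_mod_dvd ?exp1n ?hm //; nia.
have hd2 : (2 %| (k - 1) * (k + 1))%N := dvdn_trans two_dvd_n hd.
have hdp : (p ^ 2 %| (k - 1) * (k + 1))%N.
  by apply: dvdn_trans hd; apply/dvdnP; exists 2%N; nia.
have kodd : odd k.
  move: (congr1 (modn^~ 2%N) hm) => /=; rewrite !modn_dvdm ?two_dvd_n //.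
  by rewrite !modn2 oddX /=; case: (odd k).
have [hp|hp] : (p %| k - 1)%N \/ (p %| k + 1)%N.
- apply/orP; rewrite -Euclid_dvdM //; apply: dvdn_trans hdp.
  by apply/dvdnP; exists p; nia.
- left; have cp : coprime (p ^ 2) (k + 1).
    rewrite coprimeXl // prime_coprime //; apply/negP => hp'.
    have : (p %| (k + 1) - (k - 1))%N by rewrite dvdn_sub.
    rewrite sub_pm1 // => /(dvdn_leq (isT : (0 < 2)%N)).
    by rewrite leqNgt p_gt2.
  have h2 : (p ^ 2 %| k - 1)%N by rewrite -(Gauss_dvdl _ cp).
  have h3 : (2 %| k - 1)%N by rewrite dvdn2 oddB // kodd.
  have hn : (n %| k - 1)%N by rewrite Gauss_dvd ?cop2p2 ?h2 ?h3.
  apply/permP => z; rewrite Ek perm1 powmod.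
  have -> : ((k %% n) = 1 %% n)%N by apply/eqP; rewrite eqn_mod_dvd.
  by rewrite -powmod expg1.
- right; have cp : coprime (p ^ 2) (k - 1).
    rewrite coprimeXl // prime_coprime //; apply/negP => hp'.
    have : (p %| (k + 1) - (k - 1))%N by rewrite dvdn_sub.
    rewrite sub_pm1 // => /(dvdn_leq (isT : (0 < 2)%N)).
    by rewrite leqNgt p_gt2.
  have h2 : (p ^ 2 %| k + 1)%N by rewrite -(Gauss_dvdr _ cp).
  have h3 : (2 %| k + 1)%N by rewrite dvdn2 oddD kodd.
  have hn : (n %| k + 1)%N by rewrite Gauss_dvd ?cop2p2 ?h2 ?h3.
  apply/permP => z; rewrite Ek permE; apply/eqP; rewrite eq_sym eq_invg_mul.
  by rewrite -expgS powmod -addn1 (eqP hn) expg0.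
Qed.

Lemma cycT : cyclic [set: gT].
Proof. by rewrite setT_g cycle_cyclic. Qed.

Lemma Aab a b : a \in Aut [set: gT] -> b \in Aut [set: gT] -> a * b = b * a.
Proof.
move=> aA bA; have := Aut_cyclic_abelian cycT.
by move/centsP => /(_ a aA b bA).
Qed.

Lemma card_Aut : #|Aut [set: gT]| = (p.-1 * p)%N.
Proof.
rewrite card_Aut_cyclic ?cycT // card_gT totient_coprime ?cop2p2 //.
by rewrite totient_pfactor // mul1n.
Qed.

Lemma decomp phi : phi \in Aut [set: gT] -> phi ^+ n = 1 ->
  exists psi, [/\ psi \in Aut [set: gT], psi ^+ p = 1 &
     phi = psi \/ phi = psi * inv_perm gT].
Proof.
move=> A pn.
have pA : phi ^+ (p.-1 * p)%N = 1 by rewrite -card_Aut expg_cardG.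
have h2p : phi ^+ (2 * p)%N = 1.
  apply/eqP; rewrite -order_dvdn -(sub_2p (prime_gt0 pr_p)) dvdn_sub //.
    by rewrite order_dvdn pn.
  by rewrite dvdn_mull // order_dvdn pA.
set eps := phi ^+ p.
have eA : eps \in Aut [set: gT] by rewrite groupX.
have e2 : eps ^+ 2 = 1 by rewrite -expgM mulnC.
have ep : eps ^+ p = eps.
  by rewrite {1}(odd_decomp odd_p) expgD expgM e2 expg1n mul1g expg1.
exists (phi * eps); split; first by rewrite groupM.
  rewrite expgMn; last by apply: Aab.
  by rewrite ep -/eps sqg.
have Ephi : phi = phi * eps * eps by rewrite -mulgA sqg e2 mulg1.
case: (aut_2 eA e2) => E; rewrite E in Ephi *; [left|right] => //.
by rewrite mulg1.
Qed.

Lemma inv_case (H : {group {perm gT}}) x psi : regular H ->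
  psi \in Aut [set: gT] -> psi ^+ p = 1 ->
  hol_elt x (psi * inv_perm gT) \in H -> psi = 1.
Proof.
move=> rH A pp hH; have [j Ej] := aut_p A pp.
set k := (1 + 2 * p * j)%N.
set phi := psi * inv_perm gT.
have phiA : phi \in Aut [set: gT] by rewrite groupM ?inv_aut.
set h := hol_elt x phi.
have hE : forall m, h m = x * (m ^+ k)^-1.
  by move=> m; rewrite holE permM permE Ej.
set m0 := x ^+ (p./2).+1.
have hfix : (h * h) m0 = m0.
  rewrite permM; set w := h m0.
  have hw : w * m0 ^+ k = x by rewrite /w hE mulgKV.
  rewrite hE; apply: (mulIg (w ^+ k)); rewrite mulgKV.
  apply: (mulIg (m0 ^+ (k * k))); rewrite -mulgA expgM -expgMn; last by apply: comm.
  rewrite hw /m0 -!expgM -expgS -expgD powmod [RHS]powmod.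
  congr (x ^+ _); rewrite -add1n (idB j odd_p) -/k.
  by rewrite addnC mulnC modnMDl.
have hh : h * h \in 'C_H[m0 | 'P] by apply/stabP; split; rewrite ?groupM.
move: rH => [_ st]; move: hh; rewrite st inE hol_mul // => /eqP E.
have [_ E2] := hol_inj (groupM phiA phiA) (Aut_id gT) (etrans E (esym (hol_11 gT))).
apply: (psi1 odd_p _ pp); rewrite -sqg -E2 /phi.
rewrite -mulgA (mulgA (inv_perm gT)) (Aab inv_aut A) -!mulgA inv_inv mulg1.
by [].
Qed.

Lemma ord_cyc x psi : #[x] = n -> psi \in Aut [set: gT] -> psi ^+ p = 1 ->
  (hol_elt x psi) ^+ p = hol_elt (x ^+ p) 1 /\ #[hol_elt x psi] = n.
Proof.
move=> ox A pp; have [j Ej] := aut_p A pp.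
set k := (1 + 2 * p * j)%N.
have hp1 : forall m, (hol_elt x psi ^+ m) 1 = x ^+ geo k m.
  elim=> [|m IH]; first by rewrite expg0 perm1 expg0.
  rewrite expgSr permM IH holE Ej -expgM -expgS /=.
  by rewrite mulnC add1n.
have [J hJ] := geo_p j odd_p.
have Hp : (hol_elt x psi) ^+ p = hol_elt (x ^+ p) 1.
  rewrite hol_expg // hp1 hJ expgD expgM -ox expg_order expg1n mulg1 pp //.
split=> //.
apply: div_lemma pr_p _ _ _.
- rewrite order_dvdn (_ : n = p * (2 * p))%N; last by rewrite mulnCA mulnn.
  rewrite expgM Hp trans_expg -expgM mulnCA mulnn.
  by rewrite -ox expg_order hol_11.
- rewrite order_dvdn mulnC expgM Hp trans_expg -expgM trans_eq1.
  by rewrite -order_dvdn ox (mulnC p 2) nd2p // prime_gt1.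
- rewrite order_dvdn expgM Hp trans_expg -expgM trans_eq1.
  by rewrite -order_dvdn ox ndp2 // prime_gt1.
Qed.

Lemma Zp_cyc m : cyclic (Zp m).
Proof.
rewrite /Zp; case: ifP => _; last exact: cyclic1.
by apply/cyclicP; exists Zp1; rewrite Zp_cycle.
Qed.

Lemma gen_ord x : generator [set: gT] x -> #[x] = n.
Proof. by move/eqP => E; rewrite orderE -E card_gT. Qed.

Lemma fix_pow (k : {perm gT}) z e : k z = z -> (k ^+ e) z = z.
Proof. by move=> kz; elim: e => [|e IH]; rewrite ?expg0 ?perm1 // expgSr permM IH. Qed.

Lemma n_gt0 : (0 < n)%N.
Proof. by rewrite muln_gt0 expn_gt0 (prime_gt0 pr_p). Qed.

Lemma cyc_reg x phi : #[x] = n -> phi \in Aut [set: gT] -> phi ^+ p = 1 ->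
  regular <[hol_elt x phi]>.
Proof.
move=> ox A pp; have [Hp oh] := ord_cyc ox A pp.
set h := hol_elt x phi.
apply: card_reg; first by rewrite -orderE oh card_gT.
apply/trivgP/subsetP => k /stabP [/cycleP [m ->] k1]; rewrite inE.
have hm : h ^+ m = hol_elt 1 (phi ^+ m) by rewrite hol_expg // k1.
have e1 : (h ^+ m) ^+ p = 1.
  rewrite hm hol_expg ?groupX // -expgM mulnC expgM pp expg1n fix_pow ?hol_11 //.
  by rewrite hol_at1 // groupX.
have e2 : (h ^+ m) ^+ p = hol_elt (x ^+ (p * m)) 1.
  by rewrite expgAC Hp trans_expg expgM.
have : (n %| p * m)%N.
  by rewrite -ox order_dvdn -trans_eq1 -e2 e1.
rewrite (_ : n = p * (2 * p))%N; last by rewrite mulnCA mulnn.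
rewrite dvdn_pmul2l ?prime_gt0 // => /dvdnP [r mr].
rewrite mr in k1 *.
have ph1 : phi ^+ (r * (2 * p))%N = 1.
  by rewrite mulnCA (mulnC r p) mulnCA expgM pp expg1n.
by rewrite hol_expg // k1 ph1 hol_11.
Qed.

Lemma cyc_iso x phi : #[x] = n -> phi \in Aut [set: gT] -> phi ^+ p = 1 ->
  <[hol_elt x phi]> \isog Zp n.
Proof.
move=> ox A pp; have [_ oh] := ord_cyc ox A pp.
by rewrite isog_cyclic_card ?cycle_cyclic // Zp_cyc card_Zp ?n_gt0 // -orderE oh eqxx.
Qed.

Definition S2 := <[g ^+ 2]>.
Definition fS (x : gT) : {perm gT} := if x \in S2 then 1 else inv_perm gT.
Definition Eset := [set hol_elt x (fS x) | x : gT].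

Lemma powS2 i : (g ^+ i \in S2) = ~~ odd i.
Proof.
apply/idP/idP.
- case/cycleP => m /eqP; rewrite -expgM eq_expg_mod_order og => /eqP E.
  move: (congr1 (modn^~ 2%N) E) => /=; rewrite !modn_dvdm ?two_dvd_n // !modn2 oddM /=.
  by case: (odd i).
- move=> ev; rewrite -(odd_double_half i) (negbTE ev) add0n -mul2n expgM mem_cycle //.
Qed.

Lemma mulS2 a b : (a * b \in S2) = ((a \in S2) == (b \in S2)).
Proof.
have [i ->] := gpow a; have [j ->] := gpow b.
by rewrite -expgD !powS2 oddD; case: (odd i); case: (odd j).
Qed.

Lemma fS_aut x : fS x \in Aut [set: gT].
Proof. by rewrite /fS; case: ifP => _; rewrite ?group1 ?inv_aut. Qed.

Lemma fS_app y x : (fS y x \in S2) = (x \in S2).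
Proof. by rewrite /fS; case: ifP => _; rewrite ?perm1 // permE groupV. Qed.

Lemma fS_mul x y : fS x * fS y = fS (y * fS y x).
Proof.
rewrite {3}/fS mulS2 fS_app /fS.
case: (x \in S2); case: (y \in S2) => /=; by rewrite ?mulg1 ?mul1g ?inv_inv.
Qed.

Lemma E_group : group_set Eset.
Proof.
apply/group_setP; split.
  by apply/imsetP; exists 1 => //; rewrite /fS group1 hol_11.
move=> _ _ /imsetP[x _ ->] /imsetP[y _ ->]; rewrite hol_mul ?fS_aut // fS_mul.
by apply/imsetP; exists (y * fS y x).
Qed.

Canonical Egrp := Group E_group.

Lemma E_card : #|Eset| = n.
Proof.
rewrite card_imset; first by rewrite -cardsT card_gT.
by move=> x1 x2 E; rewrite -(hol_at1 x1 (fS_aut x1)) E hol_at1 // fS_aut.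
Qed.

Lemma E_reg : regular Eset.
Proof.
apply: (@card_reg _ Egrp); first by rewrite E_card card_gT.
apply/trivgP/subsetP => k /stabP [/imsetP[x _ ->] k1]; rewrite inE.
rewrite hol_at1 ?fS_aut // in k1; rewrite k1 /fS group1 hol_11 //.
Qed.

Lemma ordT y : #[hol_elt y 1] = #[y].
Proof.
apply/eqP; rewrite eqn_dvd !order_dvdn trans_expg trans_eq1 expg_order /=.
rewrite eqxx -trans_eq1 -trans_expg; apply/eqP; apply: expg_order.
Qed.

Lemma notT (a : gT) y : hol_elt a (inv_perm gT) \notin <[hol_elt y 1]>.
Proof.
apply/negP => /cycleP [m]; rewrite trans_expg => E.
have [_ E2] := hol_inj inv_aut (Aut_id gT) E.
by move: inv_neq1; rewrite E2 eqxx.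
Qed.

Lemma gen_E (K : {group {perm gT}}) y k0 : K \subset Eset -> #[y] = (p ^ 2)%N ->
  hol_elt y 1 \in K -> k0 \in K -> k0 \notin <[hol_elt y 1]> -> K :=: Eset.
Proof.
move=> KE oy TK k0K k0T.
have dK : (p ^ 2 %| #|K|)%N by rewrite -oy -ordT order_dvdG.
have dE : (#|K| %| n)%N by rewrite -E_card (cardSg KE).
case/dvdnP: dK => c cK; move: dE; rewrite cK dvdn_pmul2r ?expn_gt0 ?prime_gt0 //.
move=> cd; have c2 : (c <= 2)%N by apply: dvdn_leq.
case: c cK cd c2 => [|[|[|c]]] // cK _ _.
- case/negP: k0T; suff -> : <[hol_elt y 1]> = K by [].
  apply/eqP; rewrite eqEcard cycle_subG TK -orderE ordT oy cK mul1n leqnn //.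
- apply/eqP; rewrite eqEcard KE E_card cK leqnn //.
Qed.

Lemma g2_ord (a : gT) : #[a] = n -> #[a ^+ 2] = (p ^ 2)%N.
Proof. by move=> oa; rewrite orderXdiv oa ?two_dvd_n // mulKn. Qed.

Lemma sqS2 (a : gT) : a ^+ 2 \in S2.
Proof. by have [i ->] := gpow a; rewrite -expgM powS2 oddM andbF. Qed.

Lemma genS2 (a : gT) : #[a] = n -> a \notin S2.
Proof.
move=> oa; apply/negP => aS.
have : (n %| p ^ 2)%N.
  by rewrite -oa -(g2_ord og) /S2 orderE cardSg // cycle_subG.
by rewrite (negbTE (ndp2 (prime_gt1 pr_p))).
Qed.

Lemma inE1 x : x \in S2 -> hol_elt x 1 \in Eset.
Proof. by move=> xS; apply/imsetP; exists x => //; rewrite /fS xS. Qed.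

Lemma inEinv x : x \notin S2 -> hol_elt x (inv_perm gT) \in Eset.
Proof. by move=> xS; apply/imsetP; exists x => //; rewrite /fS (negbTE xS). Qed.

Lemma Dg (a : gT) : #[a] = n ->
  <<[set hol_elt (a ^+ 2) 1; hol_elt a (inv_perm gT)]>> = Eset.
Proof.
move=> oa; apply: (@gen_E <<[set hol_elt (a ^+ 2) 1; hol_elt a (inv_perm gT)]>>%G
  (a ^+ 2) (hol_elt a (inv_perm gT))) => /=.
- by rewrite gen_subG subUset !sub1set inE1 ?sqS2 // inEinv // genS2.
- exact: g2_ord.
- by rewrite mem_gen // !inE eqxx.
- by rewrite mem_gen // !inE eqxx orbT.
- exact: notT.
Qed.

Lemma gVneq : g^-1 != g.
Proof.
apply/eqP => /eqP.
have E2 : g * g = g ^+ 2 by rewrite expgS expg1.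
rewrite eq_invg_mul E2 -order_dvdn og => /dvdn_leq; move/(_ isT).
have := p_gt2; nia.
Qed.

Lemma g_neq1 : g != 1.
Proof. by apply/eqP => E; move: gVneq; rewrite E invg1 eqxx. Qed.

Lemma ord_u x : x != 1 -> #[hol_elt x (inv_perm gT)] = 2.
Proof.
move=> x1; set u := hol_elt x _.
have u2 : u ^+ 2 = 1 by rewrite -sqg hol_mul ?inv_aut // inv_inv permE mulgV hol_11.
have d : (#[u] %| 2)%N by rewrite order_dvdn u2.
have le : (#[u] <= 2)%N by apply: dvdn_leq.
have u1 : #[u] != 1%N.
  rewrite order_eq1; apply/eqP => E; move: x1.
  by rewrite -(hol_at1 x inv_aut) -/u E perm1 eqxx.
move: (order_gt0 u) le u1; case: #[u] => [|[|[|k]]] //.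
Qed.

Lemma E_isog : Eset \isog 'D_n.
Proof.
set u1 := hol_elt g (inv_perm gT); set u2 := hol_elt g^-1 (inv_perm gT).
have GE : <<[set u1; u2]>> = Eset.
  apply: (@gen_E <<[set u1; u2]>>%G (g ^+ 2) u1) => /=.
  - by rewrite gen_subG subUset !sub1set !inEinv ?groupV ?genS2.
  - exact: g2_ord.
  - rewrite (_ : hol_elt (g ^+ 2) 1 = u2 * u1); last first.
      by rewrite hol_mul ?inv_aut // inv_inv permE invgK sqg.
    by rewrite groupM // mem_gen // !inE eqxx ?orbT.
  - by rewrite mem_gen // !inE eqxx.
  - exact: notT.
have neq : u1 != u2.
  apply/eqP => E; have [E1 _] := hol_inj inv_aut inv_aut E.
  by move: gVneq; rewrite -E1 eqxx.
have := involutions_gen_dihedral (ord_u g_neq1) (ord_u _) neq.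
rewrite /= GE E_card; apply.
by rewrite eq_invg1 g_neq1.
Qed.

Lemma classify (H : {group {perm gT}}) : H \subset Hol gT -> regular H ->
  H \in cyc_regs gT p \/ H \in dih_regs gT.
Proof.
move=> HH rH.
have cH : #|H| = n by rewrite reg_card // card_gT.
have hol_form : forall h, h \in H -> exists2 phi, phi \in Aut [set: gT] & h = hol_elt (h 1) phi.
  move=> h hH; move/subsetP: HH => /(_ h hH) /imset2P [x phi _ A ->].
  by exists phi => //; rewrite hol_at1.
have rot_n : forall x phi, phi \in Aut [set: gT] -> hol_elt x phi \in H -> phi ^+ n = 1.
  move=> x phi A hH; have := expg_cardG hH; rewrite cH hol_expg // => E.
  by have [_ ] := hol_inj (groupX _ A) (Aut_id gT) (etrans E (esym (hol_11 gT))).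
have [h0 h0H h01] := reg_ex g rH.
have [phi A E0] := hol_form h0 h0H; rewrite h01 in E0.
have h0H' := h0H; rewrite E0 in h0H'.
have [psi [psiA psip [Ephi|Ephi]]] := decomp A (rot_n _ _ A h0H').
- left; rewrite Ephi in E0; have [_ oh] := ord_cyc og psiA psip.
  have HC : H :=: <[h0]>.
    apply/eqP; rewrite eq_sym eqEcard cycle_subG h0H /= -orderE E0 oh cH leqnn //.
  rewrite inE; apply/existsP; exists g; apply/existsP; exists psi.
  by rewrite psiA psip /generator -setT_g !eqxx /= HC E0.
- right; rewrite Ephi in E0 h0H'.
  have psi1 := inv_case rH psiA psip h0H'.
  rewrite psi1 mul1g in E0; rewrite E0 in h0H.
  have [h1 h1H h11] := reg_ex (g ^+ 2) rH.
  have [phi1 A1 E1] := hol_form h1 h1H; rewrite h11 in E1.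
  have h1H' := h1H; rewrite E1 in h1H'.
  have [psi' [psi'A psi'p [Ephi1|Ephi1]]] := decomp A1 (rot_n _ _ A1 h1H').
  + rewrite Ephi1 in h1H'.
    have hm : hol_elt g (inv_perm gT) * hol_elt (g ^+ 2) psi' \in H by rewrite groupM.
    rewrite hol_mul // (Aab inv_aut psi'A) in hm.
    have psi'1 := inv_case rH psi'A psi'p hm.
    rewrite psi'1 in h1H'.
    have sub : <<[set hol_elt (g ^+ 2) 1; hol_elt g (inv_perm gT)]>> \subset H.
      by rewrite gen_subG subUset !sub1set h1H' h0H.
    rewrite (Dg og) in sub.
    have HE : H :=: Eset.
      by apply/eqP; rewrite eq_sym eqEcard sub E_card cH leqnn.
    rewrite inE; apply/existsP; exists g.
    by rewrite /generator -setT_g eqxx /= (Dg og) HE.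
  + rewrite Ephi1 in h1H'.
    have psi'1 := inv_case rH psi'A psi'p h1H'.
    rewrite psi'1 mul1g in h1H'.
    have fixg : hol_elt (g ^+ 2) (inv_perm gT) g = (1 : {perm gT}) g.
      by rewrite holE permE perm1 expgS expg1 -mulgA mulgV mulg1.
    have := reg_uniq rH h1H' (group1 _) fixg.
    move/(congr1 (fun f : {perm gT} => f 1)); rewrite hol_at1 ?inv_aut // perm1.
    move/eqP; rewrite -order_eq1 (g2_ord og).
    by case: p pr_p => [|[|q]].
Qed.

Lemma reg_of_mem (H : {group {perm gT}}) :
  H \in cyc_regs gT p \/ H \in dih_regs gT -> regular H.
Proof.
case.
- rewrite inE => /existsP [x /existsP [phi /and4P [gx phiA /eqP phip /eqP HE]]].
  by rewrite HE; apply: cyc_reg => //; apply: gen_ord.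
- rewrite inE => /existsP [a /andP [ga /eqP HE]].
  by rewrite HE Dg ?gen_ord //; apply: E_reg.
Qed.

Definition PA := [set psi in Aut [set: gT] | psi ^+ p == 1].

Lemma card_PA : #|PA| = p.
Proof.
have pA : (p %| #|Aut [set: gT]|)%N by rewrite card_Aut dvdn_mull.
have [phi0 phi0A o0] := Cauchy pr_p pA.
suff -> : PA = <[phi0]> by rewrite -orderE o0.
apply/setP => psi; rewrite inE; apply/andP/idP.
- case=> psiA /eqP psip.
  have S : p.-Hall(Aut [set: gT]) <[phi0]>.
    rewrite pHallE cycle_subG phi0A /= -orderE o0 card_Aut.
    have e1 : ((p.-1)`_p = 1)%N by rewrite part_p'nat // p'natE // ndvd_pred // prime_gt1.
    have e2 : (p`_p = p)%N by rewrite part_pnat_id // pnat_id.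
    rewrite partnM; [by rewrite e1 e2 mul1n | apply: pred_gt0; exact: prime_gt1 | exact: prime_gt0].
  have nS : <[phi0]> <| Aut [set: gT].
    by rewrite -sub_abelian_normal ?Aut_cyclic_abelian ?cycT // cycle_subG.
  rewrite (mem_normal_Hall S nS psiA) /p_elt.
  by apply: (pnat_dvd _ (pnat_id pr_p)); rewrite order_dvdn psip.
- case/cycleP => i ->; split; first by rewrite groupX.
  by rewrite expgAC -o0 expg_order expg1n.
Qed.

Lemma cyc_eq : cyc_regs gT p = [set <[hol_elt g psi]>%G | psi in PA].
Proof.
apply/setP => H; apply/idP/imsetP.
- rewrite inE => /existsP [x /existsP [phi /and4P [gx phiA /eqP phip /eqP HE]]].
  have ox := gen_ord gx.
  have rC := cyc_reg ox phiA phip.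
  have [k /cycleP [m Ek] k1] := reg_ex g rC.
  have Ek' : k = hol_elt g (phi ^+ m) by rewrite Ek hol_expg // -Ek k1.
  have psiA : phi ^+ m \in Aut [set: gT] by rewrite groupX.
  have psip : (phi ^+ m) ^+ p = 1 by rewrite expgAC phip expg1n.
  exists (phi ^+ m); first by rewrite inE psiA psip eqxx.
  apply: val_inj => /=; rewrite HE; apply/eqP; rewrite eq_sym eqEcard cycle_subG.
  rewrite -Ek' Ek mem_cycle /= -!orderE -Ek Ek'.
  by rewrite (ord_cyc ox phiA phip).2 (ord_cyc og psiA psip).2.
- case=> psi; rewrite inE => /andP [psiA psip] ->; rewrite inE.
  apply/existsP; exists g; apply/existsP; exists psi.
  by rewrite /generator -setT_g psiA psip !eqxx.
Qed.

Lemma card_cyc : #|cyc_regs gT p| = p.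
Proof.
rewrite cyc_eq card_in_imset ?card_PA //.
move=> psi1 psi2 /setIdP [A1 /eqP p1] /setIdP [A2 /eqP p2].
move/(congr1 val) => /= E.
have : hol_elt g psi2 \in <[hol_elt g psi1]> by rewrite E cycle_id.
move=> m2; have E' : hol_elt g psi1 = hol_elt g psi2.
  by apply: (reg_uniq (z := 1) (cyc_reg og A1 p1) (cycle_id _) m2); rewrite !hol_at1.
by have [] := hol_inj A1 A2 E'.
Qed.

Lemma dih_eq : dih_regs gT = [set Egrp].
Proof.
apply/setP => H; rewrite in_set1; apply/idP/eqP.
- rewrite inE => /existsP [a /andP [ga /eqP HE]]; apply: val_inj.
  by rewrite /= HE Dg // gen_ord.
- move->; rewrite inE; apply/existsP; exists g.
  by rewrite /generator -setT_g eqxx /= Dg.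
Qed.

End Main.

Theorem proposition11 (p : nat) (gT : finGroupType) :
  prime p -> odd p ->
  cyclic [set: gT] -> #|[set: gT]| = (2 * p ^ 2)%N ->
  (forall H : {group {perm gT}}, H \subset Hol gT -> (regular H <->
      (H \in cyc_regs gT p) \/ (H \in dih_regs gT)))
  /\ #|cyc_regs gT p| = p
  /\ (forall H : {group {perm gT}}, H \in cyc_regs gT p -> H \isog Zp (2 * p ^ 2))
  /\ #|dih_regs gT| = 1%N
  /\ (forall H : {group {perm gT}}, H \in dih_regs gT -> H \isog 'D_(2 * p ^ 2)).
Proof.
move=> pr_p odd_p /cyclicP [g Eg] cG.
have og : #[g] = (2 * p ^ 2)%N by rewrite orderE -Eg cG.
have gG : forall z : gT, z \in <[g]> by move=> z; rewrite -Eg in_setT.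
split; first by move=> H HH; split; [exact: (classify pr_p odd_p og gG) | exact: (reg_of_mem pr_p odd_p og gG)].
split; first exact: (card_cyc pr_p odd_p og gG).
split.
  move=> H; rewrite inE => /existsP [x /existsP [phi /and4P [gx phiA /eqP phip /eqP HE]]].
  by rewrite HE; apply: (cyc_iso pr_p odd_p og gG) => //; apply: (gen_ord og gG gx).
split; first by rewrite (dih_eq pr_p odd_p og gG) cards1.
move=> H; rewrite (dih_eq pr_p odd_p og gG) in_set1 => /eqP ->.
exact: (E_isog pr_p odd_p og gG).
Qed.
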